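(* Assume the composite setting below with (G2). Let $(u_k,\Delta_k)\subset\mathbb{R}^n\times(0,\infty)$ with $u_k\to u$, $\Delta_k\to0$ and $\psi(u_k,\Delta_k)\to0$. Then $0\in\partial f(u)$.
   Context: Composite setting: $J:\mathbb{R}^m\times\mathbb{R}^n\to\mathbb{R}$ continuously differentiable; $S:\mathbb{R}^n\to\mathbb{R}^m$ locally Lipschitz continuous and directionally differentiable (directional derivative $S'(u;h)$); $f(u):=J(S(u),u)$. $\partial_B S(u)$ is the Bouligand subdifferential: all limits $\lim_j S'(u_j)$ with $u_j\to u$ and $S$ differentiable at $u_j$. $\partial f(u)$ is the Clarke subdifferential of $f$. $B_r(x)$ is the closed Euclidean ball. For each $u\in\mathbb{R}^n$, $\Delta>0$ let $\mathcal G(u,\Delta)\subset\mathbb{R}^{m\times n}$ be a nonempty bounded set, and define the model $\phi(u,\Delta;d):=\sup_{G\in\mathcal G(u,\Delta)}\langle G^\top\nabla_yJ(S(u),u)+\nabla_uJ(S(u),u),d\rangle$ and $\psi(u,\Delta):=-\inf_{\|h\|\le1}\phi(u,\Delta;h)$. Conditions: (G1) $\bigcup_{\xi\in B_\Delta(u)}\partial_BS(\xi)\subseteq\mathcal G(u,\Delta)$ for all $u$, $\Delta>0$; (G2) if $(u_k,\Delta_k)\to(u,0)$ with $0\notin\partial f(u)$, then $\sup_{G\in\mathcal G(u_k,\Delta_k)}\inf_{W\in\partial_BS(u)}\|G-W\|\to0$; (D) for all $u,h\in\mathbb{R}^n$ there is $G\in\partial_BS(u)$ with $S'(u;h)=Gh$.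 *)

(* Defs.v *)
From Stdlib Require Import Reals Classical ClassicalEpsilon.
From mathcomp Require Import ssreflect ssrfun ssrbool eqtype ssrnat seq fintype bigop.

Open Scope R_scope.

Definition Vec (n : nat) := 'I_n -> R.
Definition Mat (m n : nat) := 'I_m -> 'I_n -> R.

Definition vadd {n} (x y : Vec n) : Vec n := fun i => x i + y i.
Definition vsub {n} (x y : Vec n) : Vec n := fun i => x i - y i.
Definition vscale {n} (a : R) (x : Vec n) : Vec n := fun i => a * x i.
Definition dot {n} (x y : Vec n) : R := \big[Rplus/0]_(i < n) (x i * y i).
Definition vnorm {n} (x : Vec n) : R := sqrt (dot x x).
Definition mulmv {m n} (A : Mat m n) (h : Vec n) : Vec m :=
  fun i => \big[Rplus/0]_(j < n) (A i j * h j).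
Definition mulmtv {m n} (A : Mat m n) (y : Vec m) : Vec n :=
  fun j => \big[Rplus/0]_(i < m) (A i j * y i).
Definition msub {m n} (A B : Mat m n) : Mat m n := fun i j => A i j - B i j.
(* Frobenius norm (all norms on R^{m x n} are equivalent) *)
Definition mnorm {m n} (A : Mat m n) : R :=
  sqrt (\big[Rplus/0]_(i < m) \big[Rplus/0]_(j < n) (A i j * A i j)).

Definition vconv {n} (x : nat -> Vec n) (x0 : Vec n) : Prop :=
  forall eps, 0 < eps -> exists N, forall k, le N k -> vnorm (vsub (x k) x0) < eps.
Definition mconv {m n} (A : nat -> Mat m n) (A0 : Mat m n) : Prop :=
  forall eps, 0 < eps -> exists N, forall k, le N k -> mnorm (msub (A k) A0) < eps.

(* supremum / infimum of a set of reals (value 0 if no least upper bound exists;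
   in all uses below the sets are nonempty and bounded) *)
Definition Rsup (E : R -> Prop) : R :=
  match excluded_middle_informative (exists l, is_lub E l) with
  | left H => proj1_sig (constructive_indefinite_description _ H)
  | right _ => 0
  end.
Definition Rinf (E : R -> Prop) : R := - Rsup (fun x => E (- x)).

Definition J_has_grad {m n} (J : Vec m -> Vec n -> R) (y : Vec m) (u : Vec n)
  (gy : Vec m) (gu : Vec n) : Prop :=
  forall eps, 0 < eps -> exists delta, 0 < delta /\
    forall (p : Vec m) (q : Vec n),
      sqrt (dot p p + dot q q) < delta ->
      Rabs (J (vadd y p) (vadd u q) - J y u - dot gy p - dot gu q)
        <= eps * sqrt (dot p p + dot q q).

Definition cont2 {m n k} (F : Vec m -> Vec n -> Vec k) : Prop :=
  forall y u eps, 0 < eps -> exists delta, 0 < delta /\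
    forall y' u', sqrt (dot (vsub y' y) (vsub y' y) + dot (vsub u' u) (vsub u' u)) < delta ->
      vnorm (vsub (F y' u') (F y u)) < eps.

Definition C1_with_grad {m n} (J : Vec m -> Vec n -> R)
  (Jy : Vec m -> Vec n -> Vec m) (Ju : Vec m -> Vec n -> Vec n) : Prop :=
  (forall y u, J_has_grad J y u (Jy y u) (Ju y u)) /\ cont2 Jy /\ cont2 Ju.

Definition loc_lipschitz {n m} (S : Vec n -> Vec m) : Prop :=
  forall u, exists r L, 0 < r /\ 0 <= L /\
    forall x y, vnorm (vsub x u) <= r -> vnorm (vsub y u) <= r ->
      vnorm (vsub (S x) (S y)) <= L * vnorm (vsub x y).

Definition dir_deriv {n m} (S : Vec n -> Vec m) (u h : Vec n) (d : Vec m) : Prop :=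
  forall eps, 0 < eps -> exists delta, 0 < delta /\
    forall t, 0 < t < delta ->
      vnorm (vsub (vscale (/ t) (vsub (S (vadd u (vscale t h))) (S u))) d) < eps.

Definition dir_differentiable {n m} (S : Vec n -> Vec m) : Prop :=
  forall u h, exists d, dir_deriv S u h d.

Definition frechet {n m} (S : Vec n -> Vec m) (x : Vec n) (A : Mat m n) : Prop :=
  forall eps, 0 < eps -> exists delta, 0 < delta /\
    forall h, vnorm h < delta ->
      vnorm (vsub (vsub (S (vadd x h)) (S x)) (mulmv A h)) <= eps * vnorm h.

Definition bouligand {n m} (S : Vec n -> Vec m) (u : Vec n) (W : Mat m n) : Prop :=
  exists (uj : nat -> Vec n) (Aj : nat -> Mat m n),
    (forall j, frechet S (uj j) (Aj j)) /\ vconv uj u /\ mconv Aj W.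

(* Clarke subdifferential of f at u:
   g \in ∂f(u)  iff  <g,h> <= f°(u;h) := limsup_{y->u, t↓0} (f(y+th)-f(y))/t
   for all h; the limsup inequality is written out. *)
Definition clarke {n} (f : Vec n -> R) (u g : Vec n) : Prop :=
  forall h eps delta, 0 < eps -> 0 < delta ->
    exists y t, vnorm (vsub y u) < delta /\ 0 < t < delta /\
      (f (vadd y (vscale t h)) - f y) / t > dot g h - eps.

Definition vzero {n} : Vec n := fun _ => 0.

Definition fcomp {m n} (J : Vec m -> Vec n -> R) (S : Vec n -> Vec m) : Vec n -> R :=
  fun u => J (S u) u.

Definition redgrad {m n} (Jy : Vec m -> Vec n -> Vec m) (Ju : Vec m -> Vec n -> Vec n)
  (S : Vec n -> Vec m) (u : Vec n) (G : Mat m n) : Vec n :=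
  vadd (mulmtv G (Jy (S u) u)) (Ju (S u) u).

Definition phi {m n} (Jy : Vec m -> Vec n -> Vec m) (Ju : Vec m -> Vec n -> Vec n)
  (S : Vec n -> Vec m) (Gs : Vec n -> R -> Mat m n -> Prop)
  (u : Vec n) (Delta : R) (d : Vec n) : R :=
  Rsup (fun v => exists G, Gs u Delta G /\ v = dot (redgrad Jy Ju S u G) d).

Definition psi {m n} (Jy : Vec m -> Vec n -> Vec m) (Ju : Vec m -> Vec n -> Vec n)
  (S : Vec n -> Vec m) (Gs : Vec n -> R -> Mat m n -> Prop)
  (u : Vec n) (Delta : R) : R :=
  - Rinf (fun v => exists h, vnorm h <= 1 /\ v = phi Jy Ju S Gs u Delta h).

Definition Gs_ok {m n} (Gs : Vec n -> R -> Mat m n -> Prop) : Prop :=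
  forall u Delta, 0 < Delta ->
    (exists G, Gs u Delta G) /\ (exists B, forall G, Gs u Delta G -> mnorm G <= B).

(* condition (G2); sup_G inf_W ||G - W|| -> 0 written out *)
Definition cond_G2 {m n} (J : Vec m -> Vec n -> R) (S : Vec n -> Vec m)
  (Gs : Vec n -> R -> Mat m n -> Prop) : Prop :=
  forall (u : Vec n) (uk : nat -> Vec n) (Dk : nat -> R),
    vconv uk u -> (forall k, 0 < Dk k) -> Un_cv Dk 0 ->
    ~ clarke (fcomp J S) u vzero ->
    forall eps, 0 < eps -> exists K, forall k, le K k ->
      forall G, Gs (uk k) (Dk k) G ->
        exists W, bouligand S u W /\ mnorm (msub G W) < eps.

(* Main.v *)
Require Import Defs.
From HB Require Import structures.
From Stdlib Require Import Reals Lra Classical ClassicalEpsilon FunctionalExtensionality.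
From mathcomp Require Import ssreflect ssrfun ssrbool eqtype ssrnat seq fintype bigop.
Open Scope R_scope.

HB.instance Definition _ := Monoid.isComLaw.Build R 0 Rplus (fun x y z => esym (Rplus_assoc x y z)) Rplus_comm Rplus_0_l.

Section Sums.
Variable n : nat.
Implicit Types F G : 'I_n -> R.

Lemma sum_ge0 F : (forall i, 0 <= F i) -> 0 <= \big[Rplus/0]_(i < n) F i.
Proof. move=> H; apply: (big_ind (fun x => 0 <= x)) => //; [lra| move=> *; lra]. Qed.

Lemma sum_le F G : (forall i, F i <= G i) ->
  \big[Rplus/0]_(i < n) F i <= \big[Rplus/0]_(i < n) G i.
Proof. move=> H; apply: (big_ind2 (fun x y => x <= y)) => //; [lra| move=> *; lra]. Qed.

Lemma sum_abs F : Rabs (\big[Rplus/0]_(i < n) F i) <= \big[Rplus/0]_(i < n) Rabs (F i).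
Proof.
apply: (big_ind2 (fun x y => Rabs x <= y)) => //.
- rewrite Rabs_R0; lra.
- move=> x1 x2 y1 y2 H1 H2. have := Rabs_triang x1 y1. lra.
- move=> i; lra.
Qed.

Lemma sum_lin a b F G : \big[Rplus/0]_(i < n) (a * F i + b * G i) =
  a * \big[Rplus/0]_(i < n) F i + b * \big[Rplus/0]_(i < n) G i.
Proof.
apply: (big_ind3 (fun x y z => x = a * y + b * z)) => //.
- ring.
- move=> x1 x2 x3 y1 y2 y3 -> ->; ring.
Qed.

Lemma sum_scal a F : a * \big[Rplus/0]_(i < n) F i = \big[Rplus/0]_(i < n) (a * F i).
Proof.
apply: (big_ind2 (fun x y => a * x = y)) => //.
- ring.
- move=> x1 x2 y1 y2 <- <-; ring.
Qed.

Lemma term_le_sum F i : (forall j, 0 <= F j) -> F i <= \big[Rplus/0]_(j < n) F j.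
Proof.
move=> H; rewrite (bigD1 i) //=.
rewrite -{1}(Rplus_0_r (F i)); apply Rplus_le_compat_l.
apply: (big_ind (fun x => 0 <= x)) => //; [lra| move=> *; lra].
Qed.

Lemma sum_single (p : 'I_n) c : \big[Rplus/0]_(j < n) (if j == p then c else 0) = c.
Proof.
rewrite (bigD1 p) //= eqxx big1; first by ring.
by move=> j /negbTE ->.
Qed.
End Sums.
Arguments sum_ge0 {n}. Arguments sum_le {n}. Arguments sum_abs {n}. Arguments sum_lin {n}.
Arguments sum_scal {n}. Arguments term_le_sum {n}. Arguments sum_single {n}.

Lemma sum_const n (F : 'I_n -> R) c : (forall i, F i <= c) ->
  \big[Rplus/0]_(i < n) F i <= INR n * c.
Proof.
elim: n F => [|k IH] F H.
- rewrite big_ord0 /=; lra.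
- rewrite big_ord_recr S_INR /=.
  rewrite Rmult_plus_distr_r Rmult_1_l. apply Rplus_le_compat; last exact: H.
  exact: (IH (fun i => F (widen_ord (leqnSn k) i)) (fun i => H _)).
Qed.

Lemma sq_sum_le n (F : 'I_n -> R) :
  \big[Rplus/0]_(i < n) (F i * F i) <=
  (\big[Rplus/0]_(i < n) Rabs (F i)) * (\big[Rplus/0]_(i < n) Rabs (F i)).
Proof.
elim: n F => [|k IH] F.
- rewrite !big_ord0; lra.
- rewrite !big_ord_recr /=.
  have IH' := IH (fun i => F (widen_ord (leqnSn k) i)).
  have Ha : 0 <= \big[Rplus/0]_(i < k) Rabs (F (widen_ord (leqnSn k) i)).
    by apply: sum_ge0 => i; apply Rabs_pos.
  set a := \big[Rplus/0]_(i < k) Rabs _ in IH' Ha *.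
  set b := \big[Rplus/0]_(i < k) (_ * _) in IH' *.
  have Hb := Rabs_pos (F ord_max).
  have E : F ord_max * F ord_max = Rabs (F ord_max) * Rabs (F ord_max).
    by rewrite -Rabs_mult Rabs_right //; apply: Rle_ge; apply: Rle_0_sqr.
  rewrite E. nra.
Qed.
Lemma le_tr {a b c : R} : a <= b -> b <= c -> a <= c.
Proof. exact: Rle_trans. Qed.

Lemma dot_ge0 {n} (x : Vec n) : 0 <= dot x x.
Proof. apply: sum_ge0 => i; apply: Rle_0_sqr. Qed.

Lemma vnorm_ge0 {n} (x : Vec n) : 0 <= vnorm x.
Proof. apply: sqrt_pos. Qed.

Lemma coord_le {n} (x : Vec n) i : Rabs (x i) <= vnorm x.
Proof.
rewrite /vnorm -sqrt_Rsqr_abs; apply: sqrt_le_1_alt.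
exact: (term_le_sum (fun j => x j * x j) i (fun j => Rle_0_sqr (x j))).
Qed.

Lemma mcoord_le {m n} (A : Mat m n) i j : Rabs (A i j) <= mnorm A.
Proof.
rewrite /mnorm -sqrt_Rsqr_abs; apply: sqrt_le_1_alt.
apply: le_tr (term_le_sum (fun j => A i j * A i j) j (fun j => Rle_0_sqr _)) _.
apply: (term_le_sum (fun i => \big[Rplus/0]_(j < n) (A i j * A i j)) i).
move=> k; apply: sum_ge0 => l; apply: Rle_0_sqr.
Qed.

Lemma vnorm_l1 {n} (x : Vec n) : vnorm x <= \big[Rplus/0]_(i < n) Rabs (x i).
Proof.
have H0 : 0 <= \big[Rplus/0]_(i < n) Rabs (x i) by apply: sum_ge0 => i; apply: Rabs_pos.
rewrite /vnorm -(sqrt_square _ H0); apply: sqrt_le_1_alt; exact: sq_sum_le.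
Qed.

Lemma l1_le {n} (x : Vec n) : \big[Rplus/0]_(i < n) Rabs (x i) <= INR n * vnorm x.
Proof. apply: sum_const => i; exact: coord_le. Qed.

Lemma vnorm_crude {n} (x y z : Vec n) :
  (forall i, Rabs (x i) <= Rabs (y i) + Rabs (z i)) -> vnorm x <= INR n * (vnorm y + vnorm z).
Proof.
move=> H; apply: le_tr (vnorm_l1 x) _; apply: sum_const => i.
have := H i; have := coord_le y i; have := coord_le z i; lra.
Qed.

Lemma dot_scale_r {n} (x h : Vec n) t : dot x (vscale t h) = t * dot x h.
Proof. rewrite /dot sum_scal; apply: eq_bigr => i _; rewrite /vscale; ring. Qed.

Lemma dot_scale_l {n} (x h : Vec n) t : dot (vscale t h) x = t * dot h x.
Proof. rewrite /dot sum_scal; apply: eq_bigr => i _; rewrite /vscale; ring. Qed.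

Lemma vnorm_scale {n} (h : Vec n) t : 0 <= t -> vnorm (vscale t h) = t * vnorm h.
Proof.
move=> Ht; rewrite /vnorm dot_scale_l dot_scale_r -Rmult_assoc sqrt_mult.
- by rewrite sqrt_square.
- nra.
- exact: dot_ge0.
Qed.

Lemma dot_bound {n} (x y : Vec n) A : (forall i, Rabs (x i) <= A) ->
  Rabs (dot x y) <= INR n * (A * vnorm y).
Proof.
move=> H; apply: le_tr (sum_abs _) _; apply: sum_const => i.
rewrite Rabs_mult; apply: Rmult_le_compat; try apply: Rabs_pos; [exact: H| exact: coord_le].
Qed.

Lemma sqrt_add_le a b : 0 <= a -> 0 <= b -> sqrt (a + b) <= sqrt a + sqrt b.
Proof.
move=> Ha Hb.
have Hsa := sqrt_pos a; have Hsb := sqrt_pos b.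
rewrite -(sqrt_square (sqrt a + sqrt b)); last lra.
apply: sqrt_le_1_alt.
have E : (sqrt a + sqrt b) * (sqrt a + sqrt b) = a + b + 2 * (sqrt a * sqrt b).
  have := sqrt_sqrt a Ha; have := sqrt_sqrt b Hb; move=> E1 E2; nra.
rewrite E; nra.
Qed.

Lemma dot_vadd_l {n} (x y h : Vec n) : dot (vadd x y) h = dot x h + dot y h.
Proof.
rewrite /dot -(Rmult_1_l (\big[Rplus/0]_(i < n) (x i * h i))).
rewrite -(Rmult_1_l (\big[Rplus/0]_(i < n) (y i * h i))) -sum_lin.
apply: eq_bigr => i _; rewrite /vadd; ring.
Qed.

Lemma dot_sub_r {n} (g p q : Vec n) : dot g (vsub p q) = dot g p - dot g q.
Proof.
rewrite /dot.
transitivity (\big[Rplus/0]_(i < n) (1 * (g i * p i) + -1 * (g i * q i))).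
  apply: eq_bigr => i _; rewrite /vsub; ring.
rewrite sum_lin; ring.
Qed.

Lemma dot_zero_l {n} (h : Vec n) : dot vzero h = 0.
Proof.
rewrite /dot big1 // => i _; rewrite /vzero; ring.
Qed.

Lemma dot_exchange {m n} (g : Vec m) (A : Mat m n) (q : Vec n) :
  dot g (mulmv A q) = dot (mulmtv A g) q.
Proof.
rewrite /dot /mulmv /mulmtv.
under eq_bigr => i _ do rewrite sum_scal.
rewrite exchange_big /=; apply: eq_bigr => j _.
rewrite Rmult_comm sum_scal; apply: eq_bigr => i _; ring.
Qed.

Lemma Rsup_lub (E : R -> Prop) : (exists l, is_lub E l) -> is_lub E (Rsup E).
Proof.
move=> H; rewrite /Rsup; case: excluded_middle_informative => // H'.
exact: proj2_sig (constructive_indefinite_description _ H').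
Qed.

Lemma lub_exists (E : R -> Prop) : (exists x, E x) -> (exists B, forall x, E x -> x <= B) ->
  exists l, is_lub E l.
Proof.
move=> [x Hx] [B HB].
have [l Hl] := completeness E (ex_intro _ B HB) (ex_intro _ x Hx).
by exists l.
Qed.

Lemma lub_approx (E : R -> Prop) l x : is_lub E l -> x < l -> exists y, E y /\ x < y.
Proof.
move=> [_ Hl] Hx; apply: NNPP => Hn.
have : l <= x.
  apply: Hl => y Ey; apply: Rnot_lt_le => Hy; apply: Hn; by exists y.
lra.
Qed.

Definition Kc (m n : nat) (M : R) := INR n * (M * (INR m * (2 * M + 1) + 1)).

Lemma mulmtv_diff {m n} (G W : Mat m n) (a b : Vec m) M d j :
  0 <= M -> 0 <= d -> d <= 1 ->
  (forall i, Rabs (W i j) <= M) -> (forall i, Rabs (b i) <= M) ->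
  (forall i, Rabs (G i j - W i j) <= d) -> (forall i, Rabs (a i - b i) <= d) ->
  Rabs (mulmtv G a j - mulmtv W b j) <= INR m * ((2 * M + 1) * d).
Proof.
move=> HM Hd Hd1 HW Hb HG Ha.
rewrite /mulmtv.
have -> : \big[Rplus/0]_(i < m) (G i j * a i) - \big[Rplus/0]_(i < m) (W i j * b i)
  = \big[Rplus/0]_(i < m) (G i j * a i - W i j * b i).
  transitivity (1 * \big[Rplus/0]_(i < m) (G i j * a i) + -1 * \big[Rplus/0]_(i < m) (W i j * b i)); first ring.
  rewrite -sum_lin; apply: eq_bigr => i _; ring.
apply: le_tr (sum_abs _) _; apply: sum_const => i.
have E : G i j * a i - W i j * b i = (G i j - W i j) * a i + W i j * (a i - b i) by ring.
rewrite E; apply: le_tr (Rabs_triang _ _) _; rewrite !Rabs_mult.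
have Hai : Rabs (a i) <= M + 1.
  have := Rabs_triang (a i - b i) (b i); rewrite /Rminus Rplus_assoc Rplus_opp_l Rplus_0_r.
  have := Ha i; have := Hb i; rewrite /Rminus; lra.
have := HG i; have := HW i; have := Ha i; have := Rabs_pos (G i j - W i j);
have := Rabs_pos (W i j); have := Rabs_pos (a i - b i). nra.
Qed.

Lemma bilin {m n} (G W : Mat m n) (a b : Vec m) (c c' h : Vec n) M d :
  0 <= M -> 0 <= d -> d <= 1 ->
  (forall i j, Rabs (W i j) <= M) -> (forall i, Rabs (b i) <= M) -> (forall j, Rabs (h j) <= M) ->
  (forall i j, Rabs (G i j - W i j) <= d) -> (forall i, Rabs (a i - b i) <= d) ->
  (forall j, Rabs (c j - c' j) <= d) ->
  Rabs (dot (vadd (mulmtv G a) c) h - dot (vadd (mulmtv W b) c') h) <= Kc m n M * d.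
Proof.
move=> HM Hd Hd1 HW Hb Hh HG Ha Hc.
have -> : dot (vadd (mulmtv G a) c) h - dot (vadd (mulmtv W b) c') h =
   \big[Rplus/0]_(j < n) ((mulmtv G a j - mulmtv W b j + (c j - c' j)) * h j).
  rewrite /dot.
  transitivity (1 * \big[Rplus/0]_(j < n) (vadd (mulmtv G a) c j * h j) +
     -1 * \big[Rplus/0]_(j < n) (vadd (mulmtv W b) c' j * h j)); first ring.
  rewrite -sum_lin; apply: eq_bigr => j _; rewrite /vadd; ring.
apply: le_tr (sum_abs _) _.
apply: le_tr (sum_const _ _ ((INR m * ((2 * M + 1) * d) + d) * M) _) _.
  move=> j; rewrite Rabs_mult; apply: Rmult_le_compat; try apply: Rabs_pos; last exact: Hh.
  apply: le_tr (Rabs_triang _ _) _; apply: Rplus_le_compat; last exact: Hc.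
  by apply: mulmtv_diff.
apply: Req_le; rewrite /Kc; ring.
Qed.

Lemma grad_close {m n} (Jy : Vec m -> Vec n -> Vec m) (Ju : Vec m -> Vec n -> Vec n)
  (S : Vec n -> Vec m) (u : Vec n) :
  cont2 Jy -> cont2 Ju -> loc_lipschitz S ->
  forall d, 0 < d -> exists rho, 0 < rho /\ forall v, vnorm (vsub v u) < rho ->
    (forall i, Rabs (Jy (S v) v i - Jy (S u) u i) <= d) /\
    (forall j, Rabs (Ju (S v) v j - Ju (S u) u j) <= d).
Proof.
move=> Cy Cu Lip d Hd.
have [d1 [Hd1 H1]] := Cy (S u) u d Hd.
have [d2 [Hd2 H2]] := Cu (S u) u d Hd.
have [r [L [Hr [HL HLip]]]] := Lip u.
exists (Rmin r (Rmin d1 d2 / (L + 1))); split.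
  apply: Rmin_pos => //; apply: Rdiv_lt_0_compat; [apply: Rmin_pos => //| lra].
move=> v Hv.
have Hvr : vnorm (vsub v u) <= r by have := Rmin_l r (Rmin d1 d2 / (L + 1)); lra.
have Hu0 : vnorm (vsub u u) <= r.
  have -> : vsub u u = vzero by apply: functional_extensionality => i; rewrite /vsub /vzero; ring.
  rewrite /vnorm /dot big1 ?sqrt_0; [lra| move=> i _; rewrite /vzero; ring].
have HS := HLip v u Hvr Hu0.
have Hsq : sqrt (dot (vsub (S v) (S u)) (vsub (S v) (S u)) + dot (vsub v u) (vsub v u))
    < Rmin d1 d2.
  apply: Rle_lt_trans (sqrt_add_le _ _ (dot_ge0 _) (dot_ge0 _)) _.
  rewrite -/(vnorm (vsub (S v) (S u))) -/(vnorm (vsub v u)).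
  have H3 := Rmin_r r (Rmin d1 d2 / (L + 1)).
  have H4 : vnorm (vsub v u) * (L + 1) < Rmin d1 d2.
    have : vnorm (vsub v u) < Rmin d1 d2 / (L + 1) by lra.
    move=> H5; apply (Rmult_lt_compat_r (L + 1)) in H5; last lra.
    by rewrite /Rdiv Rmult_assoc Rinv_l ?Rmult_1_r in H5; lra.
  have := vnorm_ge0 (vsub v u); nra.
split.
- move=> i; apply: Rlt_le; apply: Rle_lt_trans (H1 (S v) v _).
    exact: (coord_le (vsub (Jy (S v) v) (Jy (S u) u)) i).
  have := Rmin_l d1 d2; lra.
- move=> j; apply: Rlt_le; apply: Rle_lt_trans (H2 (S v) v _).
    exact: (coord_le (vsub (Ju (S v) v) (Ju (S u) u)) j).
  have := Rmin_r d1 d2; lra.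
Qed.

Lemma vsub_vadd {n} (x e : Vec n) : vsub (vadd x e) x = e.
Proof. apply: functional_extensionality => i; rewrite /vsub /vadd; ring. Qed.

Lemma lip_near {m n} (S : Vec n -> Vec m) (u : Vec n) r L x :
  (forall a b, vnorm (vsub a u) <= r -> vnorm (vsub b u) <= r ->
     vnorm (vsub (S a) (S b)) <= L * vnorm (vsub a b)) -> 0 < r ->
  vnorm (vsub x u) <= r / (2 * (INR n + 1)) ->
  forall e, vnorm e <= r / (2 * (INR n + 1)) ->
  vnorm (vsub (S (vadd x e)) (S x)) <= L * vnorm e.
Proof.
move=> HL Hr Hx e He.
have HN := pos_INR n.
have Hq : 0 < r / (2 * (INR n + 1)) by apply: Rdiv_lt_0_compat; lra.
have Hq2 : r / (2 * (INR n + 1)) * (2 * (INR n + 1)) = r by field; lra.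
have Hxr : vnorm (vsub x u) <= r by nra.
have Hxe : vnorm (vsub (vadd x e) u) <= r.
  apply: le_tr (vnorm_crude _ (vsub x u) e _) _.
    move=> i; rewrite /vsub /vadd.
    have -> : x i + e i - u i = (x i - u i) + e i by ring.
    exact: Rabs_triang.
  have := vnorm_ge0 (vsub x u); have := vnorm_ge0 e. nra.
have := HL (vadd x e) x Hxe Hxr; by rewrite vsub_vadd.
Qed.

Lemma boul_bound {m n} (S : Vec n -> Vec m) (u : Vec n) :
  loc_lipschitz S -> exists M, 0 <= M /\ forall W, bouligand S u W -> forall i p, Rabs (W i p) <= M.
Proof.
move=> Lip; have [r [L [Hr [HL HLip]]]] := Lip u.
exists (L + 2); split; first lra.
move=> W [uj [Aj [Hfr [Hcv Hmc]]]] i p.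
have HN := pos_INR n.
set q := r / (2 * (INR n + 1)).
have Hq : 0 < q by apply: Rdiv_lt_0_compat; lra.
have [K1 HK1] := Hcv q Hq.
have [K2 HK2] := Hmc 1 Rlt_0_1.
set j := Nat.max K1 K2.
have Hx : vnorm (vsub (uj j) u) <= q by apply: Rlt_le; apply: HK1; apply: Nat.le_max_l.
have HAW : Rabs (Aj j i p - W i p) <= 1.
  apply: Rlt_le; apply: Rle_lt_trans (HK2 j (Nat.le_max_r _ _)).
  exact: (mcoord_le (msub (Aj j) W) i p).
suff HA : Rabs (Aj j i p) <= L + 1.
  have := Rabs_triang (Aj j i p) (- (Aj j i p - W i p)); rewrite Rabs_Ropp.
  have -> : Aj j i p + - (Aj j i p - W i p) = W i p by ring. lra.
have [de [Hde Hfd]] := Hfr j 1 Rlt_0_1.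
set s := Rmin de q / 2.
have Hs : 0 < s by rewrite /s; have := Rmin_pos de q Hde Hq; lra.
set e : Vec n := fun k => if k == p then s else 0.
have He : vnorm e <= s.
  apply: le_tr (vnorm_l1 e) _.
  rewrite -[X in _ <= X](sum_single p s); apply: sum_le => k; rewrite /e.
  case: (k == p); rewrite ?Rabs_R0 ?Rabs_right; lra.
have Hsd : s < de by have := Rmin_l de q; rewrite /s; lra.
have Hsq : s <= q by have := Rmin_r de q; rewrite /s; lra.
have Hed : vnorm e < de by lra.
have HF := Hfd e Hed.
have Heq : vnorm e <= q by lra.
have HLe := lip_near S u r L (uj j) HLip Hr Hx e Heq.
have HAe : mulmv (Aj j) e i = Aj j i p * s.
  rewrite /mulmv -(sum_single p (Aj j i p * s)); apply: eq_bigr => k _; rewrite /e.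
  case: eqP => [->|_]; ring.
set D := vsub (vsub (S (vadd (uj j) e)) (S (uj j))) (mulmv (Aj j) e) in HF *.
have E : mulmv (Aj j) e i = vsub (S (vadd (uj j) e)) (S (uj j)) i - D i.
  rewrite /D /vsub; ring.
have H1 := coord_le D i.
have H2 := coord_le (vsub (S (vadd (uj j) e)) (S (uj j))) i.
have H3 : Rabs (Aj j i p) * s <= L * s + s.
  rewrite -(Rabs_right s); last lra.
  rewrite -Rabs_mult -HAe E.
  apply: le_tr (Rabs_triang _ _) _; rewrite Rabs_Ropp.
  rewrite (Rabs_right s); last lra.
  have HLs : L * vnorm e <= L * s by apply: Rmult_le_compat_l.
  lra.
have := Rabs_pos (Aj j i p). nra.
Qed.

Lemma chain {m n} (J : Vec m -> Vec n -> R) (Jy : Vec m -> Vec n -> Vec m)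
  (Ju : Vec m -> Vec n -> Vec n) (S : Vec n -> Vec m) (y h : Vec n) (A : Mat m n) rho L eps :
  (forall y u, J_has_grad J y u (Jy y u) (Ju y u)) -> frechet S y A -> 0 < rho -> 0 <= L ->
  (forall e, vnorm e <= rho -> vnorm (vsub (S (vadd y e)) (S y)) <= L * vnorm e) -> 0 < eps ->
  exists T, 0 < T /\ forall t, 0 < t < T ->
    Rabs ((fcomp J S (vadd y (vscale t h)) - fcomp J S y) / t
          - dot (redgrad Jy Ju S y A) h) <= eps.
Proof.
move=> HJ HF Hrho HL HLip Heps.
set gy := Jy (S y) y; set gu := Ju (S y) y.
set H := vnorm h; have HH : 0 <= H := vnorm_ge0 h.
set Mg := vnorm gy; have HMg : 0 <= Mg := vnorm_ge0 gy.
have Hm := pos_INR m.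
set c := (L + 1) * (H + 1); have Hc : 0 < c by rewrite /c; nra.
set e1 := eps / (2 * c); have He1 : 0 < e1 by apply: Rdiv_lt_0_compat; lra.
set k2 := (INR m + 1) * (Mg + 1) * (H + 1).
have Hk2 : 0 < k2 by rewrite /k2; apply: Rmult_lt_0_compat; [nra| lra].
set e2 := eps / (2 * k2); have He2 : 0 < e2 by apply: Rdiv_lt_0_compat; lra.
have [dJ [HdJ HJd]] := HJ (S y) y e1 He1.
have [dF [HdF HFd]] := HF e2 He2.
set T0 := Rmin rho (Rmin dF (dJ / c)).
have HT0 : 0 < T0.
  apply: Rmin_pos => //; apply: Rmin_pos => //; apply: Rdiv_lt_0_compat; lra.
exists (T0 / (H + 1)); split; first by apply: Rdiv_lt_0_compat; lra.
move=> t [Ht0 HtT].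
have HtH : t * (H + 1) < T0.
  have := Rmult_lt_compat_r (H + 1) _ _ ltac:(lra) HtT.
  by rewrite /Rdiv Rmult_assoc Rinv_l ?Rmult_1_r; lra.
have HT1 : T0 <= rho := Rmin_l _ _.
have HT2 := Rmin_l dF (dJ / c).
have HT3 := Rmin_r dF (dJ / c).
have HT4 : T0 <= Rmin dF (dJ / c) := Rmin_r _ _.
set q := vscale t h.
have Hq : vnorm q = t * H by rewrite /q vnorm_scale //; lra.
set p := vsub (S (vadd y q)) (S y).
have Hp : vnorm p <= L * (t * H).
  rewrite -Hq; apply: HLip; rewrite Hq -/T0. nra.
have Hp0 := vnorm_ge0 p.
have Hsq : sqrt (dot p p + dot q q) <= c * t.
  apply: le_tr (sqrt_add_le _ _ (dot_ge0 _) (dot_ge0 _)) _.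
  rewrite -/(vnorm p) -/(vnorm q) Hq /c. nra.
have Hsq2 : sqrt (dot p p + dot q q) < dJ.
  have : c * t < dJ.
    have Hdc : t * (H + 1) < dJ / c by lra.
    have E : dJ = (dJ / c) * c by field; lra.
    rewrite E; nra.
  lra.
have E1 := HJd p q Hsq2.
have Epq : vadd (S y) p = S (vadd y q).
  apply: functional_extensionality => i; rewrite /p /vsub; unfold vadd at 1; ring.
rewrite Epq in E1.
have HqF : vnorm q < dF by rewrite Hq; nra.
have E2 := HFd q HqF.
rewrite -/p in E2.
have E3 : Rabs (dot gy (vsub p (mulmv A q))) <= INR m * (Mg * (e2 * (t * H))).
  apply: le_tr (dot_bound gy _ Mg (fun i => coord_le gy i)) _.
  apply: Rmult_le_compat_l => //; apply: Rmult_le_compat_l => //; by rewrite -Hq.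
rewrite dot_sub_r dot_exchange /q dot_scale_r in E3.
rewrite -/q dot_scale_r in E1.
rewrite /fcomp /redgrad dot_vadd_l -/gy -/gu.
set X := J (S (vadd y q)) (vadd y q) - J (S y) y.
set R1 := dot (mulmtv A gy) h; set R2 := dot gu h.
set Pp := dot gy p.
have Hsum : Rabs (X - t * (R1 + R2)) <= e1 * (c * t) + INR m * (Mg * (e2 * (t * H))).
  have -> : X - t * (R1 + R2) = (X - Pp - t * R2) + (Pp - t * R1) by ring.
  apply: le_tr (Rabs_triang _ _) _; apply: Rplus_le_compat; last exact: E3.
  apply: le_tr E1 _; apply: Rmult_le_compat_l; lra.
have -> : X / t - (R1 + R2) = (X - t * (R1 + R2)) / t by field; lra.
rewrite /Rdiv Rabs_mult Rabs_inv (Rabs_right t); last lra.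
apply: (Rmult_le_reg_r t) => //.
rewrite Rmult_assoc Rinv_l; last lra.
rewrite Rmult_1_r.
have He1c : e1 * c = eps / 2 by rewrite /e1; field; lra.
have He2k : e2 * k2 = eps / 2 by rewrite /e2; field; lra.
have Hk : INR m * Mg * H <= k2 by rewrite /k2; nra.
have : INR m * (Mg * (e2 * (t * H))) <= eps / 2 * t.
  have -> : INR m * (Mg * (e2 * (t * H))) = (INR m * Mg * H) * e2 * t by ring.
  rewrite -He2k (Rmult_comm e2 k2); apply: Rmult_le_compat_r; first lra.
  apply: Rmult_le_compat_r; lra.
move=> Hlast.
have : e1 * (c * t) = eps / 2 * t by rewrite -He1c; ring.
lra.
Qed.

Lemma Kc_ge0 m n M : 0 <= M -> 0 <= Kc m n M.
Proof.
move=> HM; rewrite /Kc; have := pos_INR m; have := pos_INR n; move=> H1 H2.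
apply: Rmult_le_pos => //; apply: Rmult_le_pos => //; nra.
Qed.

Lemma small_d K eps : 0 <= K -> 0 < eps ->
  exists d, 0 < d /\ d <= 1 /\ K * d <= eps.
Proof.
move=> HK He; exists (Rmin 1 (eps / (K + 1))); split; [|split].
- apply: Rmin_pos; [lra| apply: Rdiv_lt_0_compat; lra].
- exact: Rmin_l.
- have H1 := Rmin_r 1 (eps / (K + 1)).
  have H2 : (K + 1) * (eps / (K + 1)) = eps by field; lra.
  have H3 : 0 <= Rmin 1 (eps / (K + 1)).
    apply: Rlt_le; apply: Rmin_pos; [lra| apply: Rdiv_lt_0_compat; lra].
  nra.
Qed.

Lemma part_a {m n} (J : Vec m -> Vec n -> R) (Jy : Vec m -> Vec n -> Vec m)
  (Ju : Vec m -> Vec n -> Vec n) (S : Vec n -> Vec m) (u h : Vec n) (W : Mat m n) eps delta :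
  C1_with_grad J Jy Ju -> loc_lipschitz S -> bouligand S u W -> 0 < eps -> 0 < delta ->
  exists y t, vnorm (vsub y u) < delta /\ 0 < t < delta /\
    (fcomp J S (vadd y (vscale t h)) - fcomp J S y) / t > dot (redgrad Jy Ju S u W) h - eps.
Proof.
move=> [HJ [Cy Cu]] Lip HW He Hd.
have [MW [HMW0 HMW]] := boul_bound S u Lip.
set M := MW + vnorm h + vnorm (Jy (S u) u) + 1.
have Hh0 := vnorm_ge0 h; have Hb0 := vnorm_ge0 (Jy (S u) u).
have HM : 0 <= M by rewrite /M; lra.
have [d [Hd0 [Hd1 HKd]]] := small_d (Kc m n M) (eps / 3) (Kc_ge0 m n M HM) ltac:(lra).
have [rho [Hrho Hgc]] := grad_close Jy Ju S u Cy Cu Lip d Hd0.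
have [r [L [Hr [HL HLip]]]] := Lip u.
have HN := pos_INR n.
set q := r / (2 * (INR n + 1)).
have Hq : 0 < q by apply: Rdiv_lt_0_compat; lra.
have HW' := HW.
case: HW' => [uj [Aj [Hfr [Hcv Hmc]]]].
have Hmin : 0 < Rmin delta (Rmin rho q) by apply: Rmin_pos => //; apply: Rmin_pos.
have [K1 HK1] := Hcv _ Hmin.
have [K2 HK2] := Hmc d Hd0.
set j := Nat.max K1 K2.
have Hyu := HK1 j (Nat.le_max_l _ _).
have HAW := HK2 j (Nat.le_max_r _ _).
have Hm1 := Rmin_l delta (Rmin rho q).
have Hm2 := Rmin_r delta (Rmin rho q).
have Hm3 := Rmin_l rho q.
have Hm4 := Rmin_r rho q.
have Hyq : vnorm (vsub (uj j) u) <= q by lra.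
have Hloc := lip_near S u r L (uj j) HLip Hr Hyq.
have [T [HT HTc]] := chain J Jy Ju S (uj j) h (Aj j) q L (eps / 3) HJ (Hfr j) Hq HL Hloc
   ltac:(lra).
set t := Rmin T delta / 2.
have Ht0 : 0 < t by rewrite /t; have := Rmin_pos T delta HT Hd; lra.
have HtT : t < T by have := Rmin_l T delta; rewrite /t; lra.
have Htd : t < delta by have := Rmin_r T delta; rewrite /t; lra.
exists (uj j), t; split; first lra.
split; first lra.
have Hc := HTc t (conj Ht0 HtT).
have [Ga Gu] := Hgc (uj j) ltac:(lra).
have Hbl := bilin (Aj j) W (Jy (S (uj j)) (uj j)) (Jy (S u) u) (Ju (S (uj j)) (uj j))
   (Ju (S u) u) h M d HM (Rlt_le _ _ Hd0) Hd1.
have Hbl2 : Rabs (dot (redgrad Jy Ju S (uj j) (Aj j)) h - dot (redgrad Jy Ju S u W) h)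
    <= Kc m n M * d.
  apply: Hbl => //.
  - move=> i k; apply: le_tr (HMW W HW i k) _; rewrite /M; lra.
  - move=> i; apply: le_tr (coord_le _ i) _; rewrite /M; lra.
  - move=> k; apply: le_tr (coord_le _ k) _; rewrite /M; lra.
  - move=> i k; apply: Rlt_le; apply: Rle_lt_trans HAW.
    exact: (mcoord_le (msub (Aj j) W) i k).
move: Hc Hbl2.
set Q := (fcomp J S (vadd (uj j) (vscale t h)) - fcomp J S (uj j)) / t.
set Ry := dot (redgrad Jy Ju S (uj j) (Aj j)) h.
set Ru := dot (redgrad Jy Ju S u W) h.
move=> Hc Hbl2.
have := Rabs_def2 _ _ (Rle_lt_trans _ _ (eps/3 + eps / 100) Hc ltac:(lra)).
have := Rabs_def2 _ _ (Rle_lt_trans _ _ (eps/3 + eps / 100) Hbl2 ltac:(lra)).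
lra.
Qed.

Lemma Rsup_lower (E : R -> Prop) x : E x -> Rmin 0 x <= Rsup E.
Proof.
move=> Ex; rewrite /Rsup; case: excluded_middle_informative => H.
- case: (constructive_indefinite_description _ H) => l [Hl _] /=.
  have := Hl x Ex; have := Rmin_r 0 x; lra.
- exact: Rmin_l.
Qed.

Lemma redgrad_coord {m n} (Jy : Vec m -> Vec n -> Vec m) (Ju : Vec m -> Vec n -> Vec n)
  (S : Vec n -> Vec m) v (G : Mat m n) B j : mnorm G <= B ->
  Rabs (redgrad Jy Ju S v G j) <= INR m * (B * vnorm (Jy (S v) v)) + vnorm (Ju (S v) v).
Proof.
move=> HB; rewrite /redgrad /vadd.
apply: le_tr (Rabs_triang _ _) _; apply: Rplus_le_compat; last exact: coord_le.
rewrite /mulmtv; apply: le_tr (sum_abs _) _; apply: sum_const => i.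
rewrite Rabs_mult; apply: Rmult_le_compat; try apply: Rabs_pos.
- exact: le_tr (mcoord_le G i j) HB.
- exact: coord_le.
Qed.

Lemma part_b {m n} (J : Vec m -> Vec n -> R)
  (Jy : Vec m -> Vec n -> Vec m) (Ju : Vec m -> Vec n -> Vec n)
  (S : Vec n -> Vec m) (Gs : Vec n -> R -> Mat m n -> Prop)
  (HJ : C1_with_grad J Jy Ju)
  (HSlip : loc_lipschitz S)
  (HGs : Gs_ok Gs) (HG2 : cond_G2 J S Gs)
  (u : Vec n) (uk : nat -> Vec n) (Dk : nat -> R)
  (Hpos : forall k, 0 < Dk k) (Hu : vconv uk u) (HD : Un_cv Dk 0)
  (Hpsi : Un_cv (fun k => psi Jy Ju S Gs (uk k) (Dk k)) 0)
  (Hnc : ~ clarke (fcomp J S) u vzero) (h : Vec n) tau :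
  0 < tau -> exists W, bouligand S u W /\ dot (redgrad Jy Ju S u W) h > - tau.
Proof.
move=> Htau.
case: HJ => [_ [Cy Cu]].
have [MW [HMW0 HMW]] := boul_bound S u HSlip.
set M := MW + vnorm h + vnorm (Jy (S u) u) + 1.
have Hh0 := vnorm_ge0 h; have Hb0 := vnorm_ge0 (Jy (S u) u).
have HM : 0 <= M by rewrite /M; lra.
have [d [Hd0 [Hd1 HKd]]] := small_d (Kc m n M) (tau / 2) (Kc_ge0 m n M HM) ltac:(lra).
have [rho [Hrho Hgc]] := grad_close Jy Ju S u Cy Cu HSlip d Hd0.
set c := vnorm h + 1.
have Hc : 0 < c by rewrite /c; lra.
set h' := vscale (/ c) h.
have Hh' : vnorm h' <= 1.
  rewrite /h' vnorm_scale; last by apply: Rlt_le; apply: Rinv_0_lt_compat.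
  apply: (Rmult_le_reg_l c) => //; rewrite -Rmult_assoc Rinv_r; last lra.
  rewrite /c; lra.
have [K1 HK1] := Hu rho Hrho.
have [K2 HK2] := HG2 u uk Dk Hu Hpos HD Hnc d Hd0.
have He4 : 0 < tau / (4 * c) by apply: Rdiv_lt_0_compat; lra.
have [K3 HK3] := Hpsi _ He4.
set k := Nat.max K1 (Nat.max K2 K3).
have Hk1 : le K1 k by apply: Nat.le_max_l.
have Hk2 : le K2 k by apply: Nat.le_trans (Nat.le_max_l K2 K3) (Nat.le_max_r _ _).
have Hk3 : le K3 k by apply: Nat.le_trans (Nat.le_max_r K2 K3) (Nat.le_max_r _ _).
have Hps := HK3 k Hk3; rewrite /R_dist Rminus_0_r in Hps.
have [[G0 HG0] [BG HBG]] := HGs (uk k) (Dk k) (Hpos k).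
set vk := uk k in Hps HG0 HBG *.
set P := fun h'' => (fun v => exists G, Gs vk (Dk k) G /\ v = dot (redgrad Jy Ju S vk G) h'').
set E := fun w => exists h'', vnorm h'' <= 1 /\ w = phi Jy Ju S Gs vk (Dk k) h''.
set F := fun x => E (- x).
have Hphi_low : forall h'', vnorm h'' <= 1 ->
    - (INR n * vnorm (redgrad Jy Ju S vk G0)) <= phi Jy Ju S Gs vk (Dk k) h''.
  move=> h'' H1.
  apply: le_tr (Rsup_lower _ (dot (redgrad Jy Ju S vk G0) h'') _); last by exists G0.
  have Hb := dot_bound (redgrad Jy Ju S vk G0) h'' _ (fun j => coord_le _ j).
  have HV := vnorm_ge0 (redgrad Jy Ju S vk G0); have HN := pos_INR n.
  have Hv := vnorm_ge0 h''.
  have Hx := Rle_abs (- dot (redgrad Jy Ju S vk G0) h''); rewrite Rabs_Ropp in Hx.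
  have H3 : INR n * (vnorm (redgrad Jy Ju S vk G0) * vnorm h'') <=
            INR n * vnorm (redgrad Jy Ju S vk G0).
    apply: Rmult_le_compat_l => //; nra.
  have H4 : 0 <= INR n * vnorm (redgrad Jy Ju S vk G0) by apply: Rmult_le_pos.
  apply: Rmin_glb; lra.
have HFlub : is_lub F (Rsup F).
  apply: Rsup_lub; apply: lub_exists.
    exists (- phi Jy Ju S Gs vk (Dk k) h'); rewrite /F /E Ropp_involutive; by exists h'.
  exists (INR n * vnorm (redgrad Jy Ju S vk G0)) => x [h'' [H1 Hx]].
  have := Hphi_low h'' H1; lra.
have Hpsi_eq : psi Jy Ju S Gs vk (Dk k) = Rsup F by rewrite /psi /Rinf Ropp_involutive.
have Hphi1 : - psi Jy Ju S Gs vk (Dk k) <= phi Jy Ju S Gs vk (Dk k) h'.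
  rewrite Hpsi_eq; have := proj1 HFlub (- phi Jy Ju S Gs vk (Dk k) h').
  rewrite /F /E Ropp_involutive => H; have := H (ex_intro _ h' (conj Hh' erefl)); lra.
have HPlub : is_lub (P h') (phi Jy Ju S Gs vk (Dk k) h').
  apply: Rsup_lub; apply: lub_exists; first by exists (dot (redgrad Jy Ju S vk G0) h'), G0.
  exists (INR n * ((INR m * (BG * vnorm (Jy (S vk) vk)) + vnorm (Ju (S vk) vk)) * vnorm h')).
  move=> x [G [HG ->]].
  have := dot_bound (redgrad Jy Ju S vk G) h' _ (fun j => redgrad_coord Jy Ju S vk G _ j (HBG G HG)).
  have := Rle_abs (dot (redgrad Jy Ju S vk G) h'). lra.
have [x [[G [HG ->]] Hx]] := lub_approx _ _ (phi Jy Ju S Gs vk (Dk k) h' - tau / (4 * c))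
   HPlub ltac:(lra).
have Hdh : dot (redgrad Jy Ju S vk G) h' = / c * dot (redgrad Jy Ju S vk G) h
  by rewrite /h' dot_scale_r.
have Hg : dot (redgrad Jy Ju S vk G) h > - (tau / 2).
  have := Rabs_def2 _ _ Hps; move=> [Hp1 Hp2].
  have Hgt : dot (redgrad Jy Ju S vk G) h' > - (tau / (2 * c)).
    have : tau / (4 * c) + tau / (4 * c) = tau / (2 * c) by field; lra.
    lra.
  rewrite Hdh in Hgt.
  have E1 : dot (redgrad Jy Ju S vk G) h = c * (/ c * dot (redgrad Jy Ju S vk G) h)
    by field; lra.
  rewrite E1.
  have E2 : - (tau / 2) = c * - (tau / (2 * c)) by field; lra.
  rewrite E2; apply: Rmult_lt_compat_l => //.
have [W [HW HGW]] := HK2 k Hk2 G HG.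
exists W; split => //.
have Hbl : Rabs (dot (redgrad Jy Ju S vk G) h - dot (redgrad Jy Ju S u W) h) <= Kc m n M * d.
  have [Ga Gu] := Hgc vk (HK1 k Hk1).
  apply: (bilin G W _ (Jy (S u) u) _ (Ju (S u) u) h M d HM (Rlt_le _ _ Hd0) Hd1) => //.
  - move=> i j; apply: le_tr (HMW W HW i j) _; rewrite /M; lra.
  - move=> i; apply: le_tr (coord_le _ i) _; rewrite /M; lra.
  - move=> j; apply: le_tr (coord_le _ j) _; rewrite /M; lra.
  - move=> i j; apply: Rlt_le; apply: Rle_lt_trans HGW.
    exact: (mcoord_le (msub G W) i j).
have := Rle_abs (dot (redgrad Jy Ju S vk G) h - dot (redgrad Jy Ju S u W) h).
lra.
Qed.

Theorem lemma3p4 (m n : nat) (J : Vec m -> Vec n -> R)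
  (Jy : Vec m -> Vec n -> Vec m) (Ju : Vec m -> Vec n -> Vec n)
  (S : Vec n -> Vec m) (Gs : Vec n -> R -> Mat m n -> Prop)
  (HJ : C1_with_grad J Jy Ju)
  (HSlip : loc_lipschitz S) (HSdir : dir_differentiable S)
  (HGs : Gs_ok Gs) (HG2 : cond_G2 J S Gs)
  (u : Vec n) (uk : nat -> Vec n) (Dk : nat -> R)
  (Hpos : forall k, 0 < Dk k) (Hu : vconv uk u) (HD : Un_cv Dk 0)
  (Hpsi : Un_cv (fun k => psi Jy Ju S Gs (uk k) (Dk k)) 0) :
  clarke (fcomp J S) u vzero.
Proof.
case: (classic (clarke (fcomp J S) u vzero)) => // Hnc.
move=> h eps delta He Hd.
have [W [HW HWg]] := part_b J Jy Ju S Gs HJ HSlip HGs HG2 u uk Dk Hpos Hu HD Hpsi Hnc h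
  (eps / 2) ltac:(lra).
have [y [t [Hy [Ht Hq]]]] := part_a J Jy Ju S u h W (eps / 2) delta HJ HSlip HW ltac:(lra) Hd.
exists y, t; split => //; split => //.
rewrite dot_zero_l; lra.
Qed.
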